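(* For every integer $l\ge1$, let $m=5l+3$, $L_1=[2l+1]$, $L_2=\{2l+2,\dots,4l+2\}$, $L_3=\{4l+3,\dots,5l+3\}$, and let $O_{L_s}$, $E_{L_s}$ be the sets of odd and even elements of $L_s$. Let $\mathcal{I}_7(l)$ be the instance on $[m]$ with $A_i=E_{L_1}\cup(L_2\setminus\{i+2l+1\})\cup L_3$ for $i\in O_{L_1}$; $A_i=O_{L_2}\cup(L_1\setminus\{i\})\cup L_3$ for $i\in E_{L_1}$; $A_i=O_{L_2}\cup(L_1\setminus\{i-(2l+1)\})\cup L_3$ for $i\in E_{L_2}$; $A_i=E_{L_1}\cup(L_2\setminus\{i\})\cup L_3$ for $i\in O_{L_2}$; $A_i=\{2(i-4l-2)-1,\ 2(i-3l-2)\}$ for $i\in L_3$. Then the UMCD algorithm on $\mathcal{I}_7(l)$ outputs $\beta_{\text{UMCD}}(\mathcal{I}_7(l))=l+2$.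
   Context: $B_i=[m]\setminus(A_i\cup\{i\})$. For a $0/1$ matrix $\boldsymbol{G}$ with columns indexed by $[m]$, $\boldsymbol{G}_{[k]}^L$ is the submatrix of the first $k$ rows and columns $L$; $\mathrm{mcm}(\boldsymbol{G})$ is the maximum number of $1$-entries no two in a common row or column (0 if no columns). UMCD algorithm: $N=[m]$, $k=0$; while $N\ne\emptyset$: $k\leftarrow k+1$; pick $w\in N$ minimizing $|A_w|$ over $N$ (arbitrary tie-breaking); row $k$ of $\boldsymbol{G}$ is the indicator vector of $\{w\}\cup A_w$; remove $w$ from $N$; remove every $i\in N$ with $\mathrm{mcm}(\boldsymbol{G}_{[k]}^{\{i\}\cup B_i})=\mathrm{mcm}(\boldsymbol{G}_{[k]}^{B_i})+1$; output $\beta_{\text{UMCD}}=k$. *)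

(* Defs.v *)
From mathcomp Require Import all_boot.
Set Implicit Arguments. Unset Strict Implicit. Unset Printing Implicit Defensive.

(* A 0/1 matrix G with columns indexed by [m] is represented by the sequence
   of its rows, each row being the sequence of columns carrying a 1-entry.
   The first k rows G_[k] are simply the matrix built after k iterations. *)

Definition is_matching (G : seq (seq nat)) (L : pred nat) (M : seq (nat * nat)) : bool :=
  uniq (map fst M) && uniq (map snd M) &&
  all (fun p => [&& p.1 < size G, L p.2 & p.2 \in nth [::] G p.1]) M.

Definition mcm_eq (G : seq (seq nat)) (L : pred nat) (n : nat) : Prop :=
  (exists M, is_matching G L M /\ size M = n) /\
  (forall M, is_matching G L M -> size M <= n).

Section UMCD.
Variable m : nat.
Variable A : nat -> seq nat.  (* A_i, given as a duplicate-free sequence *)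

Definition inm (j : nat) : bool := (1 <= j) && (j <= m).

Definition Bset (i : nat) : pred nat := fun j => [&& inm j, j \notin A i & j != i].

Definition removed (G : seq (seq nat)) (i : nat) : Prop :=
  exists a b, mcm_eq G (fun j => (j == i) || Bset i j) a /\ mcm_eq G (Bset i) b /\ a = b + 1.

(* States (N, G) reachable by the UMCD algorithm, for any tie-breaking. *)
Inductive umcd_reach : seq nat -> seq (seq nat) -> Prop :=
| umcd_start : umcd_reach (iota 1 m) [::]
| umcd_step N G w N' :
    umcd_reach N G ->
    w \in N ->
    (forall v, v \in N -> size (A w) <= size (A v)) ->
    (forall i, i \in N' <-> [/\ i \in N, i != w & ~ removed (rcons G (w :: A w)) i]) ->
    umcd_reach N' (rcons G (w :: A w)).
(* A run terminates when N = [::]; its output beta_UMCD is k = size G. *)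
End UMCD.

Section I7.
Variable l : nat.
Definition L1 (j : nat) : bool := (1 <= j) && (j <= 2*l+1).
Definition L2 (j : nat) : bool := (2*l+2 <= j) && (j <= 4*l+2).
Definition L3 (j : nat) : bool := (4*l+3 <= j) && (j <= 5*l+3).

Definition inA7 (i j : nat) : bool :=
  if L1 i && odd i then
    [|| L1 j && ~~ odd j, L2 j && (j != i + (2*l+1)) | L3 j]
  else if L1 i && ~~ odd i then
    [|| L2 j && odd j, L1 j && (j != i) | L3 j]
  else if L2 i && ~~ odd i then
    [|| L2 j && odd j, L1 j && (j != i - (2*l+1)) | L3 j]
  else if L2 i && odd i then
    [|| L1 j && ~~ odd j, L2 j && (j != i) | L3 j]
  else if L3 i then
    (j == 2 * (i - (4*l+2)) - 1) || (j == 2 * (i - (3*l+2)))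
  else false.

Definition A7 (i : nat) : seq nat := [seq j <- iota 1 (5*l+3) | inA7 i j].
End I7.

(* Main.v *)
Require Import Defs.
From mathcomp Require Import all_boot zify.
Set Implicit Arguments. Unset Strict Implicit.

Lemma uniq_map_eq (T U : eqType) (f : T -> U) (s : seq T) p q :
  uniq (map f s) -> p \in s -> q \in s -> f p = f q -> p = q.
Proof.
elim: s => //= x s IH /andP[nx us].
rewrite !in_cons => /orP[/eqP->|ps] /orP[/eqP->|qs] //.
- move=> e; case/negP: nx; rewrite e; exact: map_f.
- move=> e; case/negP: nx; rewrite -e; exact: map_f.
- exact: IH.
Qed.

Arguments uniq_map_eq {T U f s p q}.

Lemma matching_le_rows G L M : is_matching G L M -> size M <= size G.
Proof.
case/andP=> /andP[u1 _] al.
rewrite -(size_map fst M) -(size_iota 0 (size G)).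
apply: uniq_leq_size => // x /mapP[p pM ->].
rewrite mem_iota /=. by case/and3P: (allP al p pM).
Qed.

Lemma matching_le_cols G (L : pred nat) M s :
  (forall j, L j -> j \in s) -> is_matching G L M -> size M <= size s.
Proof.
move=> hs /andP[/andP[_ u2] al].
rewrite -(size_map snd M).
apply: uniq_leq_size => // x /mapP[p pM ->].
apply: hs. by case/and3P: (allP al p pM).
Qed.

Lemma zip_matching G (L : pred nat) cs :
  uniq cs -> size cs <= size G ->
  (forall k, k < size cs -> L (nth 0 cs k) && (nth 0 cs k \in nth [::] G k)) ->
  is_matching G L (zip (iota 0 (size cs)) cs) /\ size (zip (iota 0 (size cs)) cs) = size cs.
Proof.
move=> ucs sz hk.
have e1 : size (iota 0 (size cs)) = size cs by rewrite size_iota.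
split; last by rewrite size_zip e1 minnn.
rewrite /is_matching.
have -> : map fst (zip (iota 0 (size cs)) cs) = iota 0 (size cs).
  by apply: unzip1_zip; rewrite e1.
have -> : map snd (zip (iota 0 (size cs)) cs) = cs.
  by apply: unzip2_zip; rewrite e1.
rewrite iota_uniq ucs /=.
apply/allP => p /(nthP (0,0)) [k].
rewrite size_zip e1 minnn => hk' <-.
rewrite nth_zip //= nth_iota // add0n.
case/andP: (hk k hk') => -> -> /=. rewrite andbT. exact: leq_trans hk' sz.
Qed.

Lemma not_removed_swap m A G i c :
  (forall r, r < size G -> i \in nth [::] G r ->
     [/\ Bset m A i c, c \in nth [::] G r &
         forall r', r' < size G -> c \in nth [::] G r' -> r' = r]) ->
  ~ removed m A G i.
Proof.
move=> H [a [b [[[M [HM sM]] _] [[_ Hb] ea]]]].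
pose f := fun p : nat * nat => if p.2 == i then (p.1, c) else p.
case/andP: HM => /andP[u1 u2] al.
have fst_f : map fst (map f M) = map fst M.
  by rewrite -map_comp; apply: eq_map => p /=; rewrite /f; case: ifP.
have snd_f : map snd (map f M) = map (fun x => if x == i then c else x) (map snd M).
  by rewrite -!map_comp; apply: eq_map => p /=; rewrite /f; case: ifP.
have HM' : is_matching G (Bset m A i) (map f M).
  rewrite /is_matching fst_f u1 snd_f /=.
  apply/andP; split.
    rewrite map_inj_in_uniq // => x y /mapP[p pM ->] /mapP[q qM ->].
    have [pi|pi] := eqVneq p.2 i; have [qi|qi] := eqVneq q.2 i => //.
    + by rewrite pi qi.
    + move=> eqc. case/and3P: (allP al p pM) => hp _ ip. rewrite pi in ip.
      case/and3P: (allP al q qM) => hq _ cq. rewrite -eqc in cq.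
      have [_ _ /(_ _ hq cq) e] := H _ hp ip.
      have pq := uniq_map_eq u1 qM pM e. by rewrite pq pi eqxx in qi.
    + move=> eqc. case/and3P: (allP al q qM) => hq _ iq. rewrite qi in iq.
      case/and3P: (allP al p pM) => hp _ cp. rewrite eqc in cp.
      have [_ _ /(_ _ hp cp) e] := H _ hq iq.
      have pq := uniq_map_eq u1 pM qM e. by rewrite pq qi eqxx in pi.
  apply/allP => p' /mapP[p pM ->]. rewrite /f.
  case/and3P: (allP al p pM) => hp Lp ip.
  have [pi|pi] := eqVneq p.2 i.
    rewrite pi in ip. have [bc cin _] := H _ hp ip. by rewrite /= hp bc cin.
  by rewrite /= hp ip andbT; move: Lp => /orP[/eqP e|//]; rewrite e eqxx in pi.
have := Hb _ HM'. rewrite size_map sM ea. lia.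
Qed.

Definition row l v := v :: A7 l v.
Definition av l v := 2*(v-(4*l+2))-1.
Definition bv l v := 2*(v-(3*l+2)).
Definition partner l i := if i <= 2*l+1 then i + (2*l+1) else i - (2*l+1).

Lemma memA7 l i j : (j \in A7 l i) = (1 <= j <= 5*l+3) && inA7 l i j.
Proof. rewrite mem_filter mem_iota andbC; congr andb; lia. Qed.

Lemma inA7_L3 l v j : L3 l v -> inA7 l v j = (j == av l v) || (j == bv l v).
Proof.
move=> h; rewrite /inA7 h.
have -> : L1 l v = false by move: h; rewrite /L1 /L3; lia.
have -> : L2 l v = false by move: h; rewrite /L2 /L3; lia.
by [].
Qed.

Lemma inA7_O1 l i j : L1 l i -> odd i ->
  inA7 l i j = [|| L1 l j && ~~ odd j, L2 l j && (j != i + (2*l+1)) | L3 l j].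
Proof. by move=> h o; rewrite /inA7 h o. Qed.

Lemma inA7_E1 l i j : L1 l i -> ~~ odd i ->
  inA7 l i j = [|| L2 l j && odd j, L1 l j && (j != i) | L3 l j].
Proof. by move=> h /negbTE o; rewrite /inA7 h o. Qed.

Lemma inA7_E2 l i j : L2 l i -> ~~ odd i ->
  inA7 l i j = [|| L2 l j && odd j, L1 l j && (j != i - (2*l+1)) | L3 l j].
Proof.
move=> h /negbTE o; rewrite /inA7 h o.
have -> : L1 l i = false by move: h; rewrite /L1 /L2; lia.
by [].
Qed.

Lemma inA7_O2 l i j : L2 l i -> odd i ->
  inA7 l i j = [|| L1 l j && ~~ odd j, L2 l j && (j != i) | L3 l j].
Proof.
move=> h o; rewrite /inA7 h o.
have -> : L1 l i = false by move: h; rewrite /L1 /L2; lia.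
by [].
Qed.

Lemma rowL3 l v j : L3 l v -> (j \in row l v) = [|| j == v, j == av l v | j == bv l v].
Proof.
move=> h; rewrite in_cons memA7 inA7_L3 //; congr orb.
move: h; rewrite /L3 /av /bv; lia.
Qed.

Notation BS l := (Bset (5*l+3) (A7 l)).

Lemma BsetO1 l i j : L1 l i -> odd i ->
  BS l i j = [&& 1 <= j <= 2*l+1, odd j & j != i] || (j == i + (2*l+1)).
Proof. move=> h o; rewrite /Bset /inm memA7 inA7_O1 //; move: h o; rewrite /L1 /L2 /L3; lia. Qed.

Lemma BsetE1 l i j : L1 l i -> ~~ odd i ->
  BS l i j = [&& 2*l+2 <= j <= 4*l+2 & ~~ odd j].
Proof. move=> h o; rewrite /Bset /inm memA7 inA7_E1 //; move: h o; rewrite /L1 /L2 /L3; lia. Qed.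

Lemma BsetE2 l i j : L2 l i -> ~~ odd i ->
  BS l i j = [&& 2*l+2 <= j <= 4*l+2, ~~ odd j & j != i] || (j == i - (2*l+1)).
Proof. move=> h o; rewrite /Bset /inm memA7 inA7_E2 //; move: h o; rewrite /L1 /L2 /L3; lia. Qed.

Lemma BsetO2 l i j : L2 l i -> odd i ->
  BS l i j = [&& 1 <= j <= 2*l+1 & odd j].
Proof. move=> h o; rewrite /Bset /inm memA7 inA7_O2 //; move: h o; rewrite /L1 /L2 /L3; lia. Qed.

Lemma types l i : L1 l i || L2 l i ->
  [\/ L1 l i /\ odd i, L1 l i /\ ~~ odd i, L2 l i /\ ~~ odd i | L2 l i /\ odd i].
Proof.
case/orP=> h; case o: (odd i).
- by apply: Or41. - by apply: Or42.
- by apply: Or44. - by apply: Or43.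
Qed.

Ltac bs_cases hi :=
  case/types: hi => [[? ?]|[? ?]|[? ?]|[? ?]];
  [ rewrite ?BsetO1 // | rewrite ?BsetE1 // | rewrite ?BsetE2 // | rewrite ?BsetO2 // ];
  repeat match goal with H : is_true (L1 _ _) |- _ => move: H | H : is_true (L2 _ _) |- _ => move: H
   | H : is_true (odd _) |- _ => move: H | H : is_true (~~ odd _) |- _ => move: H end;
  rewrite /L1 /L2 /L3 /av /bv /partner.

Lemma exactly_one l v i : L3 l v -> L1 l i || L2 l i ->
  BS l i (av l v) = ~~ BS l i (bv l v).
Proof. move=> hv hi; move: hv; bs_cases hi; lia. Qed.

Lemma cover7 l i j : L1 l i || L2 l i -> BS l i j ->
  exists v, L3 l v /\ ((j == av l v) || (j == bv l v)).
Proof.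
move=> hi hb; case: (leqP j (2*l+1)) => hj.
  exists ((j+1)./2 + (4*l+2)); move: hb hj; bs_cases hi; lia.
exists (j./2 + (3*l+2)); move: hb hj; bs_cases hi; lia.
Qed.

Ltac w_cases hw :=
  case/types: hw => [[? ?]|[? ?]|[? ?]|[? ?]];
  [ rewrite ?inA7_O1 // | rewrite ?inA7_E1 // | rewrite ?inA7_E2 // | rewrite ?inA7_O2 // ].

Lemma inj_ab l v v' x : L3 l v -> L3 l v' ->
  (x == av l v) || (x == bv l v) -> (x == av l v') || (x == bv l v') -> v = v'.
Proof. rewrite /L3 /av /bv; lia. Qed.

Lemma partner_ab l v i : L3 l v -> L1 l i || L2 l i ->
  (partner l i == av l v) = (i == bv l v) /\ (partner l i == bv l v) = (i == av l v).
Proof. rewrite /L1 /L2 /L3 /av /bv /partner; case: (leqP i (2*l+1)); lia. Qed.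

Lemma partner_Bset l v i : L3 l v -> (i == av l v) || (i == bv l v) ->
  BS l i (partner l i).
Proof.
move=> hv hab.
have hi : L1 l i || L2 l i by move: hv hab; rewrite /L1 /L2 /L3 /av /bv; lia.
move: hv hab; bs_cases hi; case: (leqP i (2*l+1)); lia.
Qed.

Lemma inrow_w l w i : L1 l w || L2 l w -> L1 l i || L2 l i -> i != w -> i \notin row l w ->
  BS l i (partner l i) && (partner l i \in row l w).
Proof.
move=> hw hi ne; rewrite !in_cons !memA7.
move: ne; w_cases hw; bs_cases hi; case: (leqP i (2*l+1)); lia.
Qed.

Lemma size_L3 l v : L3 l v -> size (A7 l v) <= 2.
Proof.
move=> hv.
have -> : 2 = size [:: av l v; bv l v] by [].
apply: uniq_leq_size; first by rewrite filter_uniq // iota_uniq.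
move=> j; rewrite memA7 inA7_L3 // !inE. by case/andP.
Qed.

Lemma size_big l w : 1 <= l -> L1 l w || L2 l w -> 2 < size (A7 l w).
Proof.
move=> hl hw.
pose c := if L1 l w && ~~ odd w then 1 else 2.
have -> : 3 = size [:: 4*l+3; 4*l+4; c] by [].
apply: uniq_leq_size.
  rewrite /= !inE /c; case: ifP; lia.
move=> j; rewrite !inE memA7 /c.
move: hw; case: ifP => hc hw; w_cases hw; move: hc; rewrite /L1 /L2 /L3; lia.
Qed.

Lemma NR l S i : uniq S -> (forall v, v \in S -> L3 l v) -> inm (5*l+3) i -> i \notin S ->
  ~ removed (5*l+3) (A7 l) (map (row l) S) i.
Proof.
move=> uS hS hin hni.
apply: (@not_removed_swap _ _ _ _ (partner l i)) => r hr.
rewrite size_map in hr. rewrite (nth_map 0) //.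
set v := nth 0 S r. have hv : L3 l v := hS _ (mem_nth 0 hr).
rewrite rowL3 // => hiv.
have hab : (i == av l v) || (i == bv l v).
  case/or3P: hiv => [/eqP e|->|->]; rewrite ?orbT //.
  by move: hni; rewrite e mem_nth.
have hi' : L1 l i || L2 l i by move: hv hab; rewrite /L1 /L2 /L3 /av /bv; lia.
have [p1 p2] := partner_ab hv hi'.
have pab : (partner l i == av l v) || (partner l i == bv l v) by rewrite p1 p2 orbC.
split.
- exact: partner_Bset hv hab.
- by rewrite rowL3 // pab orbT.
- move=> r' hr'; rewrite size_map in hr'; rewrite (nth_map 0) // rowL3; last exact: hS _ (mem_nth 0 hr').
  set v' := nth 0 S r' => hc.
  have hv' : L3 l v' := hS _ (mem_nth 0 hr').
  have pab' : (partner l i == av l v') || (partner l i == bv l v').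
    case/or3P: hc => [/eqP e|->|->]; last by rewrite orbT. 2: by [].
    exfalso; move: hv' hi'; rewrite -e /L1 /L2 /L3 /partner; case: (leqP i (2*l+1)); lia.
  have e := inj_ab hv' hv pab' pab.
  by apply/eqP; rewrite -(nth_uniq 0 hr' hr uS); apply/eqP.
Qed.

Lemma sizeS l S : uniq S -> (forall v, (v \in S) = L3 l v) -> size S = l+1.
Proof.
move=> u h.
have p : perm_eq S (iota (4*l+3) (l+1)).
  apply: uniq_perm => //; first exact: iota_uniq.
  move=> v; rewrite h mem_iota /L3; lia.
by rewrite (perm_size p) size_iota.
Qed.

Definition pick2 l i v := if BS l i (av l v) then av l v else bv l v.

Lemma p2B l i v : L3 l v -> L1 l i || L2 l i -> BS l i (pick2 l i v).
Proof.
move=> hv hi; rewrite /pick2; case: ifP => // /negbT.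
by rewrite exactly_one // negbK.
Qed.

Lemma p2ab l i v : (pick2 l i v == av l v) || (pick2 l i v == bv l v).
Proof. by rewrite /pick2; case: ifP; rewrite eqxx ?orbT. Qed.

Lemma ab_row l v x : L3 l v -> (x == av l v) || (x == bv l v) -> x \in row l v.
Proof. by move=> hv hab; rewrite rowL3 // hab orbT. Qed.

Lemma BS_neq l i j : BS l i j -> j != i.
Proof. by case/and3P. Qed.

Lemma R l S w i : 1 <= l -> uniq S -> (forall v, (v \in S) = L3 l v) ->
  L1 l w || L2 l w -> L1 l i || L2 l i -> i != w ->
  removed (5*l+3) (A7 l) (rcons (map (row l) S) (row l w)) i.
Proof.
move=> hl uS h hw hi ne.
set G := rcons _ _.
have sS := sizeS uS h.
have sG : size G = l+2 by rewrite size_rcons size_map sS; lia.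
have nthG k : k < size S -> nth [::] G k = row l (nth 0 S k).
  by move=> hk; rewrite nth_rcons size_map hk (nth_map 0).
have nthGl : nth [::] G (size S) = row l w.
  by rewrite nth_rcons size_map ltnn eqxx.
have hSv k : k < size S -> L3 l (nth 0 S k).
  by move=> hk; rewrite -h mem_nth.
have inj f : (forall v, (f v == av l v) || (f v == bv l v)) -> uniq (map f S).
  move=> hf; rewrite map_inj_in_uniq // => x y hx hy e.
  apply: (inj_ab (l := l) (x := f x)); [by move: hx; rewrite h|by move: hy; rewrite h|exact: hf|by rewrite e; exact: hf].
exists (l+2), (l+1); split; [|split; [|lia]].
- split; last by move=> M /matching_le_rows; rewrite sG.
  case: (boolP (i \in row l w)) => hiw.
  + pose cs := rcons (map (pick2 l i) S) i.
    have hcs : size cs = l+2 by rewrite size_rcons size_map sS; lia.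
    have U : uniq cs.
      rewrite rcons_uniq (inj _ (p2ab l i)) andbT.
      apply/negP => /mapP [v hv e].
      have hv' : L3 l v by rewrite -h.
      by move: (BS_neq (p2B hv' hi)); rewrite -e eqxx.
    have := @zip_matching G (fun j => (j == i) || BS l i j) cs U.
    rewrite hcs sG => /(_ (leqnn _)) [].
      move=> k hk0; rewrite nth_rcons size_map.
      case: (ltnP k (size S)) => hk; last first.
        have {}hk : k = size S by move: hk0 hk; rewrite sS; lia.
        by rewrite hk eqxx eqxx nthGl hiw.
      rewrite (nth_map 0) // p2B ?hSv // orbT /= nthG //.
      by apply: ab_row; [apply: hSv | apply: p2ab].
    move=> HM sM; eexists; split; [exact: HM | exact: sM].
  + case/andP: (inrow_w hw hi ne hiw) => hpB hpw.
    pose pick1 v := if pick2 l i v == partner l i then i else pick2 l i v.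
    have p1ab v : L3 l v -> (pick1 v == av l v) || (pick1 v == bv l v).
      move=> hv; rewrite /pick1; case: ifP => [/eqP e|_]; last exact: p2ab.
      have [q1 q2] := partner_ab hv hi.
      by case/orP: (p2ab l i v); rewrite e ?q1 ?q2 => ->; rewrite ?orbT.
    have pneq : i != partner l i by move: hi; rewrite /L1 /L2 /partner; case: (leqP i (2*l+1)); lia.
    have p1neq v : pick1 v != partner l i.
      by rewrite /pick1; case: ifP => // /negbT.
    pose cs := rcons (map pick1 S) (partner l i).
    have hcs : size cs = l+2 by rewrite size_rcons size_map sS; lia.
    have U : uniq cs.
      rewrite rcons_uniq andbC.
      apply/andP; split.
        rewrite map_inj_in_uniq // => x y hx hy e.
        apply: (inj_ab (l := l) (x := pick1 x)); [by move: hx; rewrite h|by move: hy; rewrite h|by apply: p1ab; move: hx; rewrite h|by rewrite e; apply: p1ab; move: hy; rewrite h].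
      apply/negP => /mapP [v hv e]. by move: (p1neq v); rewrite -e eqxx.
    have := @zip_matching G (fun j => (j == i) || BS l i j) cs U.
    rewrite hcs sG => /(_ (leqnn _)) [].
      move=> k hk0; rewrite nth_rcons size_map.
      case: (ltnP k (size S)) => hk; last first.
        have {}hk : k = size S by move: hk0 hk; rewrite sS; lia.
        by rewrite hk eqxx hpB orbT nthGl hpw.
      rewrite (nth_map 0) // nthG //.
      apply/andP; split; last by apply: ab_row; [apply: hSv | apply: p1ab; apply: hSv].
      rewrite /pick1; case: ifP => _; first by rewrite eqxx.
      by rewrite p2B ?hSv // orbT.
    move=> HM sM; eexists; split; [exact: HM | exact: sM].
- split.
  + pose cs := map (pick2 l i) S.
    have hcs : size cs = l+1 by rewrite size_map sS.
    have U : uniq cs by rewrite (inj _ (p2ab l i)).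
    have := @zip_matching G (BS l i) cs U.
    have le12 : l+1 <= l+2 by lia.
    rewrite hcs sG => /(_ le12) [].
      move=> k; rewrite -hcs size_map => hk.
      rewrite (nth_map 0) // p2B ?hSv //= nthG //.
      by apply: ab_row; [apply: hSv | apply: p2ab].
    move=> HM sM; eexists; split; [exact: HM | exact: sM].
  + move=> M HM.
    have := @matching_le_cols _ _ _ (map (pick2 l i) S) _ HM.
    rewrite size_map sS; apply => j hj.
    have [v [hv hab]] := cover7 hi hj.
    apply/mapP; exists v; first by rewrite h.
    have ex := exactly_one hv hi.
    rewrite /pick2; case: ifP => hb; case/orP: hab => /eqP e //.
    * by move: hb; rewrite ex -e hj.
    * by move: hb; rewrite -e hj.
Qed.

Lemma L3_or l i : inm (5*l+3) i -> ~~ L3 l i -> L1 l i || L2 l i.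
Proof. rewrite /inm /L1 /L2 /L3; lia. Qed.

Lemma cover_full l (S : seq nat) : (forall v, v \in S -> L3 l v) ->
  ~~ has (fun v => L3 l v && (v \notin S)) (iota 1 (5*l+3)) -> forall v, (v \in S) = L3 l v.
Proof.
move=> hS hh v; apply/idP/idP; first exact: hS.
move=> hv; have := hasPn hh v; rewrite mem_iota hv /= negbK; apply.
by move: hv; rewrite /L3; lia.
Qed.

Lemma argmin (f : nat -> nat) (s : seq nat) x : x \in s ->
  exists2 w, w \in s & forall v, v \in s -> f w <= f v.
Proof.
elim: s x => // a s IH x _.
case: s IH => [|b s] IH.
  by exists a; [exact: mem_head | move=> v; rewrite inE => /eqP->].
have [w' w's hw'] := IH b (mem_head _ _).
case: (leqP (f a) (f w')) => h.
  exists a; first exact: mem_head.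
  move=> v; rewrite in_cons => /orP[/eqP->//|/hw']; lia.
exists w'; first by rewrite in_cons w's orbT.
move=> v; rewrite in_cons => /orP[/eqP->|/hw'//]; lia.
Qed.

Lemma w_L3 l (N S : seq nat) v0 w : 1 <= l -> (forall i, (i \in N) = inm (5*l+3) i && (i \notin S)) ->
  L3 l v0 -> v0 \notin S -> w \in N -> (forall v, v \in N -> size (A7 l w) <= size (A7 l v)) ->
  L3 l w.
Proof.
move=> hl hN hv0 v0S wN hmin.
have v0N : v0 \in N by rewrite hN v0S andbT; move: hv0; rewrite /inm /L3; lia.
have := hN w; rewrite wN => /esym/andP [winm _].
apply/negPn/negP => nw.
have := size_big hl (L3_or winm nw). have := hmin _ v0N. have := size_L3 hv0. lia.
Qed.

Lemma step_spec l (N S : seq nat) w : uniq S -> (forall v, v \in S -> L3 l v) ->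
  (forall i, (i \in N) = inm (5*l+3) i && (i \notin S)) -> w \in N -> L3 l w ->
  [/\ uniq (rcons S w), (forall v, v \in rcons S w -> L3 l v),
      rcons (map (row l) S) (w :: A7 l w) = map (row l) (rcons S w) &
      forall i, (i \in [seq j <- N | j != w]) = inm (5*l+3) i && (i \notin rcons S w) /\
        ((i \in [seq j <- N | j != w]) -> ~ removed (5*l+3) (A7 l) (map (row l) (rcons S w)) i)].
Proof.
move=> uS hS hN wN wL3.
have := hN w; rewrite wN => /esym/andP [winm wS].
have u' : uniq (rcons S w) by rewrite rcons_uniq wS uS.
have h' : forall v, v \in rcons S w -> L3 l v.
  by move=> v; rewrite mem_rcons in_cons => /orP [/eqP ->|/hS].
split => //; first by rewrite map_rcons.
move=> i.
have e : (i \in [seq j <- N | j != w]) = inm (5*l+3) i && (i \notin rcons S w).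
  by rewrite mem_filter hN mem_rcons in_cons negb_or; case: (i != w); rewrite ?andbF.
split => //; rewrite e => /andP [hi ni]. exact: NR.
Qed.

Lemma full_size l (S : seq nat) : uniq S -> (forall v, v \in S -> L3 l v) -> size S = l + 1 ->
  forall v, (v \in S) = L3 l v.
Proof.
move=> uS hS sz v; apply/idP/idP; first exact: hS.
move=> hv; apply/negPn/negP => vS.
have : size (rcons S v) <= size (iota (4*l+3) (l+1)).
  apply: uniq_leq_size; first by rewrite rcons_uniq vS uS.
  move=> x; rewrite mem_rcons in_cons mem_iota => /orP [/eqP ->|/hS]; move: hv; rewrite /L3; lia.
rewrite size_rcons size_iota sz; lia.
Qed.

Lemma run l : 1 <= l -> forall k N G S, umcd_reach (5*l+3) (A7 l) N G -> uniq S ->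
  (forall v, v \in S -> L3 l v) -> G = map (row l) S ->
  (forall i, (i \in N) = inm (5*l+3) i && (i \notin S)) -> size S + k = l + 1 ->
  exists G', umcd_reach (5*l+3) (A7 l) [::] G'.
Proof.
move=> hl; elim=> [|k IH] N G S hr uS hS eG hN sz.
- rewrite addn0 in sz.
  have full := full_size uS hS sz.
  have oneN : 1 \in N by rewrite hN /inm full /L3; lia.
  have [w wN hmin] := argmin (fun v => size (A7 l v)) oneN.
  have := hN w; rewrite wN => /esym/andP [winm wS].
  have wL : L1 l w || L2 l w by apply: L3_or winm _; rewrite -full.
  exists (rcons G (w :: A7 l w)).
  apply: umcd_step hr wN hmin _ => i; split => // -[iN ne nr]; exfalso; apply: nr.
  have := hN i; rewrite iN => /esym/andP [iinm iS].
  rewrite eG; apply: R => //; apply: L3_or iinm _; by rewrite -full.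
- case: (boolP (has (fun v => L3 l v && (v \notin S)) (iota 1 (5*l+3)))) => hh; last first.
    have := sizeS uS (cover_full hS hh); lia.
  case/hasP: hh => v0 _ /andP [hv0 v0S].
  have oneN : 1 \in N by rewrite hN /inm; apply/andP; split; first lia; apply/negP => h1; have := hS _ h1; rewrite /L3; lia.
  have [w wN hmin] := argmin (fun v => size (A7 l v)) oneN.
  have wL3 := w_L3 hl hN hv0 v0S wN hmin.
  have [u' h' eG' hN'] := step_spec uS hS hN wN wL3.
  apply: (IH [seq j <- N | j != w] (rcons G (w :: A7 l w)) (rcons S w)) => //.
  + apply: umcd_step hr wN hmin _ => i; split.
      move=> iF; have [_ nr] := hN' i; split => //.
        by move: iF; rewrite mem_filter => /andP[].
        by move: iF; rewrite mem_filter => /andP[].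
      by rewrite eG eG'; apply: nr.
    by case=> iN ne _; rewrite mem_filter ne iN.
  + by rewrite eG.
  + by move=> i; have [-> _] := hN' i.
  + by rewrite size_rcons addSnnS.
Qed.

Definition Inv l (N : seq nat) (G : seq (seq nat)) := (exists S : seq nat, [/\ uniq S, (forall v, v \in S -> L3 l v), G = map (row l) S &
  forall i, (i \in N) = inm (5*l+3) i && (i \notin S)]) \/ ((forall i, i \notin N) /\ size G = l+2).

Lemma inv_all l N G : 1 <= l -> umcd_reach (5*l+3) (A7 l) N G -> Inv l N G.
Proof.
move=> hl; elim => [|N0 G0 w N' _ [[S [uS hS eG hN]] | [hN _]] wN hmin hN'].
- left; exists [::]; split => // i; rewrite mem_iota /inm in_nil; lia.
- have := hN w; rewrite wN => /esym/andP [winm wS].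
  case: (boolP (has (fun v => L3 l v && (v \notin S)) (iota 1 (5*l+3)))) => hh.
  + case/hasP: hh => v0 _ /andP [hv0 v0S].
    have wL3 := w_L3 hl hN hv0 v0S wN hmin.
    have [u' h' eG' hF] := step_spec uS hS hN wN wL3.
    left; exists (rcons S w); split => //; first by rewrite eG.
    move=> i; have [<- nr] := hF i; apply/idP/idP.
      case/hN' => iN ne _; by rewrite mem_filter ne iN.
    move=> iF; apply/hN'; split.
      by move: iF; rewrite mem_filter => /andP[].
      by move: iF; rewrite mem_filter => /andP[].
    by rewrite eG eG'; apply: nr.
  + have full := cover_full hS hh.
    right; split; last by rewrite size_rcons eG size_map (sizeS uS full); lia.
    move=> i; apply/negP => /hN' [iN ne nr]; apply: nr.
    have := hN i; rewrite iN => /esym/andP [iinm iS].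
    rewrite eG; apply: R => //.
      by apply: L3_or winm _; rewrite -full.
    by apply: L3_or iinm _; rewrite -full.
- by rewrite (negbTE (hN w)) in wN.
Qed.

Unset Implicit Arguments.
Set Strict Implicit.

Theorem proposition18 (l : nat) : 1 <= l ->
  (exists G, umcd_reach (5*l+3) (A7 l) [::] G) /\
  (forall G, umcd_reach (5*l+3) (A7 l) [::] G -> size G = l + 2).
Proof.
move=> hl; split.
  apply: (@run l hl (l+1) _ [::] [::] (umcd_start _ _)) => //.
  by move=> i; rewrite mem_iota /inm in_nil; lia.
move=> G hr; case: (inv_all hl hr) => [[S [uS hS eG hN]] | [_ ->]] //.
have h1 : 1 \notin S by apply/negP => h1; have := hS _ h1; rewrite /L3; lia.
by have := hN 1; rewrite in_nil h1 /inm andbT; lia.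
Qed.
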